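(* Let $\Psi$ be a well-formed declarative context and $A,B$ declarative types. If $\Psi\vdash A\le B$, then there is a context $\Delta$ such that $\Psi\vdash A<:B\dashv\Delta$.
   Context: Declarative types $A ::= 1\mid\alpha\mid\forall\alpha.A\mid A\to B$; declarative contexts $\Psi ::= \cdot\mid\Psi,\alpha\mid\Psi,x:A$. Declarative subtyping $\Psi\vdash A\le B$: least relation with $\alpha\in\Psi\Rightarrow\Psi\vdash\alpha\le\alpha$; $\Psi\vdash1\le1$; ($\Psi\vdash B_1\le A_1$, $\Psi\vdash A_2\le B_2$) $\Rightarrow\Psi\vdash A_1\to A_2\le B_1\to B_2$; ($\Psi\vdash\tau$ for a quantifier-free $\tau$ whose variables are in $\Psi$, $\Psi\vdash[\tau/\alpha]A\le B$) $\Rightarrow\Psi\vdash\forall\alpha.A\le B$; $\Psi,\beta\vdash A\le B\Rightarrow\Psi\vdash A\le\forall\beta.B$. Algorithmic types add existential variables $\hat\alpha$: $A ::= 1\mid\alpha\mid\hat\alpha\mid\forall\alpha.A\mid A\to B$; monotypes $\tau ::= 1\mid\alpha\mid\hat\alpha\mid\tau\to\tau'$. Algorithmic contexts $\Gamma ::= \cdot\mid\Gamma,\alpha\mid\Gamma,x:A\mid\Gamma,\hat\alpha\mid\Gamma,\hat\alpha=\tau\mid\Gamma,\blacktriangleright_{\hat\alpha}$, each variable declared at most once, each type/solution well-formed under the prefix to its left. $\Gamma\vdash A$: $\alpha$ declared in $\Gamma$, $\hat\alpha$ declared (solved or not), arrows componentwise, $\Gamma\vdash\forall\alpha.A$ iff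 $\Gamma,\alpha\vdash A$. $\Gamma[\Theta]$ denotes a context with $\Theta$ inside; $\Gamma[\hat\alpha][\hat\beta]$ means $\hat\alpha$ declared left of $\hat\beta$. $[\Gamma]A$ replaces each solved $\hat\alpha$ ($\hat\alpha=\tau\in\Gamma$) by $[\Gamma]\tau$, recursively. Variables introduced in premises are fresh. Algorithmic subtyping $\Gamma\vdash A<:B\dashv\Delta$: $\Gamma[\alpha]\vdash\alpha<:\alpha\dashv\Gamma[\alpha]$; $\Gamma\vdash1<:1\dashv\Gamma$; $\Gamma[\hat\alpha]\vdash\hat\alpha<:\hat\alpha\dashv\Gamma[\hat\alpha]$; ($\Gamma\vdash B_1<:A_1\dashv\Theta$, $\Theta\vdash[\Theta]A_2<:[\Theta]B_2\dashv\Delta$) $\Rightarrow\Gamma\vdash A_1\to A_2<:B_1\to B_2\dashv\Delta$; $\Gamma,\blacktriangleright_{\hat\alpha},\hat\alpha\vdash[\hat\alpha/\alpha]A<:B\dashv\Delta,\blacktriangleright_{\hat\alpha},\Theta\Rightarrow\Gamma\vdash\forall\alpha.A<:B\dashv\Delta$; $\Gamma,\alpha\vdash A<:B\dashv\Delta,\alpha,\Theta\Rightarrow\Gamma\vdash A<:\forall\alpha.B\dashv\Delta$; ($\hat\alpha\notin FV(A)$, $\Gamma[\hat\alpha]\vdash\hat\alpha:\leqq A\dashv\Delta$) $\Rightarrow\Gamma[\hat\alpha]\vdash\hat\alpha<:A\dashv\Delta$; ($\hat\alpha\notin FV(A)$, $\Gamma[\hat\alpha]\vdash A\leqq:\hat\alpha\dashv\Delta$)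 $\Rightarrow\Gamma[\hat\alpha]\vdash A<:\hat\alpha\dashv\Delta$. Instantiation $\Gamma\vdash\hat\alpha:\leqq A\dashv\Delta$: ($\Gamma\vdash\tau$) $\Rightarrow\Gamma,\hat\alpha,\Gamma'\vdash\hat\alpha:\leqq\tau\dashv\Gamma,\hat\alpha=\tau,\Gamma'$; $\Gamma[\hat\alpha][\hat\beta]\vdash\hat\alpha:\leqq\hat\beta\dashv\Gamma[\hat\alpha][\hat\beta=\hat\alpha]$; ($\Gamma[\hat\alpha_2,\hat\alpha_1,\hat\alpha=\hat\alpha_1\to\hat\alpha_2]\vdash A_1\leqq:\hat\alpha_1\dashv\Theta$, $\Theta\vdash\hat\alpha_2:\leqq[\Theta]A_2\dashv\Delta$) $\Rightarrow\Gamma[\hat\alpha]\vdash\hat\alpha:\leqq A_1\to A_2\dashv\Delta$; $\Gamma[\hat\alpha],\beta\vdash\hat\alpha:\leqq B\dashv\Delta,\beta,\Delta'\Rightarrow\Gamma[\hat\alpha]\vdash\hat\alpha:\leqq\forall\beta.B\dashv\Delta$. Instantiation $\Gamma\vdash A\leqq:\hat\alpha\dashv\Delta$: ($\Gamma\vdash\tau$) $\Rightarrow\Gamma,\hat\alpha,\Gamma'\vdash\tau\leqq:\hat\alpha\dashv\Gamma,\hat\alpha=\tau,\Gamma'$; $\Gamma[\hat\alpha][\hat\beta]\vdash\hat\beta\leqq:\hat\alpha\dashv\Gamma[\hat\alpha][\hat\beta=\hat\alpha]$; ($\Gamma[\hat\alpha_2,\hat\alpha_1,\hat\alpha=\hat\alpha_1\to\hat\alpha_2]\vdash\hat\alpha_1:\leqq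 A_1\dashv\Theta$, $\Theta\vdash[\Theta]A_2\leqq:\hat\alpha_2\dashv\Delta$) $\Rightarrow\Gamma[\hat\alpha]\vdash A_1\to A_2\leqq:\hat\alpha\dashv\Delta$; $\Gamma[\hat\alpha],\blacktriangleright_{\hat\beta},\hat\beta\vdash[\hat\beta/\beta]B\leqq:\hat\alpha\dashv\Delta,\blacktriangleright_{\hat\beta},\Delta'\Rightarrow\Gamma[\hat\alpha]\vdash\forall\beta.B\leqq:\hat\alpha\dashv\Delta$. *)

(* Defs.v *)
(* Locally nameless representation of the (algorithmic)
   types of Dunfield & Krishnaswami; declarative types are those without
   existential variables. *)
From Stdlib Require Import List Arith.
Import ListNotations.

(* Types.  [TBVar n] is a bound (de Bruijn) variable, [TFVar a] a free
   universal variable alpha, [TEx a] an existential variable alpha-hat,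
   [TAll A] is forall alpha. A (A's bound index 0 is alpha). *)
Inductive typ : Type :=
| TUnit : typ
| TBVar : nat -> typ
| TFVar : nat -> typ
| TEx   : nat -> typ
| TAll  : typ -> typ
| TArr  : typ -> typ -> typ.

Fixpoint open_rec (k : nat) (u : typ) (A : typ) : typ :=
  match A with
  | TUnit => TUnit
  | TBVar n => if Nat.eqb n k then u else TBVar n
  | TFVar a => TFVar a
  | TEx a => TEx a
  | TAll B => TAll (open_rec (S k) u B)
  | TArr B C => TArr (open_rec k u B) (open_rec k u C)
  end.
Definition open (A u : typ) : typ := open_rec 0 u A.

Fixpoint subst_ex (a : nat) (t : typ) (A : typ) : typ :=
  match A with
  | TUnit => TUnit
  | TBVar n => TBVar n
  | TFVar b => TFVar b
  | TEx b => if Nat.eqb a b then t else TEx b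
  | TAll B => TAll (subst_ex a t B)
  | TArr B C => TArr (subst_ex a t B) (subst_ex a t C)
  end.

Fixpoint fv_u (A : typ) : list nat :=
  match A with
  | TFVar a => [a]
  | TAll B => fv_u B
  | TArr B C => fv_u B ++ fv_u C
  | _ => []
  end.
Fixpoint fv_e (A : typ) : list nat :=
  match A with
  | TEx a => [a]
  | TAll B => fv_e B
  | TArr B C => fv_e B ++ fv_e C
  | _ => []
  end.

Fixpoint mono (A : typ) : Prop :=
  match A with
  | TAll _ => False
  | TArr B C => mono B /\ mono C
  | _ => True
  end.

Definition decl_typ (A : typ) : Prop := fv_e A = [].

(* Context entries; contexts are lists read left to right. *)
Inductive entry : Type :=
| CUVar   : nat -> entry
| CVar    : nat -> typ -> entry
| CEx     : nat -> entry
| CSolved : nat -> typ -> entry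
| CMarker : nat -> entry.

Definition ctx := list entry.

Fixpoint uvars (G : ctx) : list nat :=
  match G with
  | [] => []
  | CUVar a :: G' => a :: uvars G'
  | _ :: G' => uvars G'
  end.
Fixpoint tvars (G : ctx) : list nat :=
  match G with
  | [] => []
  | CVar x _ :: G' => x :: tvars G'
  | _ :: G' => tvars G'
  end.
Fixpoint evars (G : ctx) : list nat :=
  match G with
  | [] => []
  | CEx a :: G' => a :: evars G'
  | CSolved a _ :: G' => a :: evars G'
  | _ :: G' => evars G'
  end.
Fixpoint markers (G : ctx) : list nat :=
  match G with
  | [] => []
  | CMarker a :: G' => a :: markers G'
  | _ :: G' => markers G'
  end.

Fixpoint wf_typ_at (G : ctx) (k : nat) (A : typ) : Prop :=
  match A with
  | TUnit => True
  | TBVar n => n < k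
  | TFVar a => In a (uvars G)
  | TEx a => In a (evars G)
  | TAll B => wf_typ_at G (S k) B
  | TArr B C => wf_typ_at G k B /\ wf_typ_at G k C
  end.
Definition wf_typ (G : ctx) (A : typ) : Prop := wf_typ_at G 0 A.

Inductive wf_ctx : ctx -> Prop :=
| wf_nil : wf_ctx []
| wf_uvar : forall G a, wf_ctx G -> ~ In a (uvars G) -> wf_ctx (G ++ [CUVar a])
| wf_var : forall G x A, wf_ctx G -> ~ In x (tvars G) -> wf_typ G A ->
    wf_ctx (G ++ [CVar x A])
| wf_ex : forall G a, wf_ctx G -> ~ In a (evars G) -> wf_ctx (G ++ [CEx a])
| wf_solved : forall G a t, wf_ctx G -> ~ In a (evars G) -> mono t ->
    wf_typ G t -> wf_ctx (G ++ [CSolved a t])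
| wf_marker : forall G a, wf_ctx G -> ~ In a (markers G) -> ~ In a (evars G) ->
    wf_ctx (G ++ [CMarker a]).

Definition decl_entry (e : entry) : Prop :=
  match e with
  | CUVar _ => True
  | CVar _ A => decl_typ A
  | _ => False
  end.
Definition decl_ctx (G : ctx) : Prop := Forall decl_entry G.

(* [Gamma]A : rightmost solutions are applied first; since a solution only
   mentions variables to its left, this replaces each solved alpha-hat by
   [Gamma]tau recursively. *)
Definition apply_ctx (G : ctx) (A : typ) : typ :=
  fold_right (fun e B => match e with
                         | CSolved a t => subst_ex a t B
                         | _ => B
                         end) A G.

Definition fresh_u (G : ctx) (a : nat) (As : list typ) : Prop :=
  ~ In a (uvars G) /\ Forall (fun A => ~ In a (fv_u A)) As.
Definition fresh_e (G : ctx) (a : nat) (As : list typ) : Prop :=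
  ~ In a (evars G) /\ ~ In a (markers G) /\ Forall (fun A => ~ In a (fv_e A)) As.

Inductive dsub : ctx -> typ -> typ -> Prop :=
| dsub_var : forall P a, In (CUVar a) P -> dsub P (TFVar a) (TFVar a)
| dsub_unit : forall P, dsub P TUnit TUnit
| dsub_arr : forall P A1 A2 B1 B2,
    dsub P B1 A1 -> dsub P A2 B2 -> dsub P (TArr A1 A2) (TArr B1 B2)
| dsub_allL : forall P A B t,
    mono t -> wf_typ P t -> dsub P (open A t) B -> dsub P (TAll A) B
| dsub_allR : forall P A B b,
    fresh_u P b [A; B] ->
    dsub (P ++ [CUVar b]) A (open B (TFVar b)) -> dsub P A (TAll B).

Inductive asub : ctx -> typ -> typ -> ctx -> Prop :=
| asub_var : forall G a, In (CUVar a) G -> asub G (TFVar a) (TFVar a) G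
| asub_unit : forall G, asub G TUnit TUnit G
| asub_ex : forall G a, In (CEx a) G -> asub G (TEx a) (TEx a) G
| asub_arr : forall G T D A1 A2 B1 B2,
    asub G B1 A1 T ->
    asub T (apply_ctx T A2) (apply_ctx T B2) D ->
    asub G (TArr A1 A2) (TArr B1 B2) D
| asub_allL : forall G A B a D Th,
    fresh_e G a [A; B] ->
    asub (G ++ [CMarker a; CEx a]) (open A (TEx a)) B (D ++ [CMarker a] ++ Th) ->
    asub G (TAll A) B D
| asub_allR : forall G A B a D Th,
    fresh_u G a [A; B] ->
    asub (G ++ [CUVar a]) A (open B (TFVar a)) (D ++ [CUVar a] ++ Th) ->
    asub G A (TAll B) D
| asub_instL : forall G a A D,
    In (CEx a) G -> ~ In a (fv_e A) -> inst_l G a A D -> asub G (TEx a) A D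
| asub_instR : forall G a A D,
    In (CEx a) G -> ~ In a (fv_e A) -> inst_r G A a D -> asub G A (TEx a) D

with inst_l : ctx -> nat -> typ -> ctx -> Prop :=
| instl_solve : forall G1 G2 a t,
    mono t -> wf_typ G1 t ->
    inst_l (G1 ++ CEx a :: G2) a t (G1 ++ CSolved a t :: G2)
| instl_reach : forall G1 G2 G3 a b,
    inst_l (G1 ++ CEx a :: G2 ++ CEx b :: G3) a (TEx b)
           (G1 ++ CEx a :: G2 ++ CSolved b (TEx a) :: G3)
| instl_arr : forall G1 G2 a a1 a2 A1 A2 T D,
    a1 <> a2 -> a1 <> a -> a2 <> a ->
    fresh_e (G1 ++ CEx a :: G2) a1 [A1; A2] ->
    fresh_e (G1 ++ CEx a :: G2) a2 [A1; A2] ->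
    inst_r (G1 ++ [CEx a2; CEx a1; CSolved a (TArr (TEx a1) (TEx a2))] ++ G2)
           A1 a1 T ->
    inst_l T a2 (apply_ctx T A2) D ->
    inst_l (G1 ++ CEx a :: G2) a (TArr A1 A2) D
| instl_allR : forall G a b B D D',
    In (CEx a) G -> fresh_u G b [B] ->
    inst_l (G ++ [CUVar b]) a (open B (TFVar b)) (D ++ CUVar b :: D') ->
    inst_l G a (TAll B) D

with inst_r : ctx -> typ -> nat -> ctx -> Prop :=
| instr_solve : forall G1 G2 a t,
    mono t -> wf_typ G1 t ->
    inst_r (G1 ++ CEx a :: G2) t a (G1 ++ CSolved a t :: G2)
| instr_reach : forall G1 G2 G3 a b,
    inst_r (G1 ++ CEx a :: G2 ++ CEx b :: G3) (TEx b) a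
           (G1 ++ CEx a :: G2 ++ CSolved b (TEx a) :: G3)
| instr_arr : forall G1 G2 a a1 a2 A1 A2 T D,
    a1 <> a2 -> a1 <> a -> a2 <> a ->
    fresh_e (G1 ++ CEx a :: G2) a1 [A1; A2] ->
    fresh_e (G1 ++ CEx a :: G2) a2 [A1; A2] ->
    inst_l (G1 ++ [CEx a2; CEx a1; CSolved a (TArr (TEx a1) (TEx a2))] ++ G2)
           a1 A1 T ->
    inst_r T (apply_ctx T A2) a2 D ->
    inst_r (G1 ++ CEx a :: G2) (TArr A1 A2) a D
| instr_allL : forall G a b B D D',
    In (CEx a) G -> fresh_e G b [B] ->
    inst_r (G ++ [CMarker b; CEx b]) (open B (TEx b)) a (D ++ CMarker b :: D') ->
    inst_r G (TAll B) a D.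

(* Main.v *)
Require Import Defs.
From Stdlib Require Import List Arith Lia Permutation.
Import ListNotations.

Fixpoint sapp (th : nat -> typ) (A : typ) : typ :=
  match A with
  | TEx c => th c
  | TAll B => TAll (sapp th B)
  | TArr B C => TArr (sapp th B) (sapp th C)
  | X => X
  end.

Fixpoint closed_at (k : nat) (A : typ) : Prop :=
  match A with
  | TBVar n => n < k
  | TAll B => closed_at (S k) B
  | TArr B C => closed_at k B /\ closed_at k C
  | _ => True
  end.

Fixpoint tsize (A : typ) : nat :=
  match A with TAll B => S (tsize B) | TArr B C => S (tsize B + tsize C) | _ => 1 end.
Fixpoint msz (A : typ) : nat :=
  match A with TAll B => msz B | TArr B C => S (msz B + msz C) | _ => 1 end.

Lemma tsize_pos : forall A, 1 <= tsize A.
Proof. destruct A; simpl; lia. Qed.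
Lemma msz_pos : forall A, 1 <= msz A.
Proof. induction A; simpl; lia. Qed.

Lemma open_closed : forall A j k u, closed_at j A -> j <= k -> open_rec k u A = A.
Proof.
  induction A; simpl; intros; auto.
  - destruct (Nat.eqb_spec n k); [lia|auto].
  - f_equal; apply IHA with (j := S j); auto; lia.
  - destruct H; f_equal; eauto.
Qed.

Lemma sapp_open : forall th, (forall c, closed_at 0 (th c)) ->
  forall A k u, sapp th (open_rec k u A) = open_rec k (sapp th u) (sapp th A).
Proof.
  intros th Hc; induction A; simpl; intros; auto.
  - destruct (Nat.eqb n k); auto.
  - symmetry; apply open_closed with (j := 0); auto; lia.
  - f_equal; auto.
  - f_equal; auto.
Qed.

Lemma tsize_open : forall A k u, tsize u = 1 -> tsize (open_rec k u A) = tsize A.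
Proof.
  induction A; simpl; intros; auto;
  try (destruct (Nat.eqb n k); auto); try (rewrite IHA; auto); try (rewrite IHA1, IHA2; auto).
Qed.

Lemma msz_open : forall A k u, msz A <= msz (open_rec k u A).
Proof.
  induction A; simpl; intros; auto.
  - destruct (Nat.eqb n k); auto. apply msz_pos.
  - specialize (IHA1 k u); specialize (IHA2 k u); lia.
Qed.

Lemma fv_e_open_fvar : forall A k b, fv_e (open_rec k (TFVar b) A) = fv_e A.
Proof.
  induction A; simpl; intros; auto.
  - destruct (Nat.eqb n k); auto.
  - rewrite IHA1, IHA2; auto.
Qed.

Lemma fv_e_open_ex : forall A k b x, In x (fv_e (open_rec k (TEx b) A)) -> x = b \/ In x (fv_e A).
Proof.
  induction A; simpl; intros; eauto.
  - destruct (Nat.eqb n k); simpl in *; intuition.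
  - apply in_app_or in H; destruct H as [H|H];
      [destruct (IHA1 _ _ _ H) | destruct (IHA2 _ _ _ H)]; auto; right; apply in_or_app; auto.
Qed.

Lemma fv_u_sapp : forall th A x, In x (fv_u A) -> In x (fv_u (sapp th A)).
Proof.
  induction A; simpl; intros; auto.
  - contradiction.
  - apply in_app_or in H; apply in_or_app; intuition.
Qed.

Lemma sapp_agree : forall th th' A, (forall c, In c (fv_e A) -> th c = th' c) -> sapp th A = sapp th' A.
Proof.
  induction A; simpl; intros; auto.
  - f_equal; auto.
  - f_equal; [apply IHA1 | apply IHA2]; intros; apply H; apply in_or_app; auto.
Qed.

Lemma sapp_decl : forall th A, fv_e A = [] -> sapp th A = A.
Proof.
  induction A; simpl; intros; auto; try discriminate.
  - f_equal; auto.
  - apply app_eq_nil in H; destruct H; f_equal; auto.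
Qed.

Lemma msz_sapp_in : forall th A a, In a (fv_e A) -> msz (th a) <= msz (sapp th A).
Proof.
  induction A; simpl; intros; try contradiction.
  - destruct H; [subst; auto | contradiction].
  - auto.
  - apply in_app_or in H; destruct H; [specialize (IHA1 _ H) | specialize (IHA2 _ H)]; lia.
Qed.

Fixpoint maxl (l : list nat) : nat := match l with [] => 0 | x :: l => Nat.max x (maxl l) end.
Lemma maxl_in : forall l x, In x l -> x <= maxl l.
Proof. induction l; simpl; intros; [contradiction|]. destruct H; subst; [lia|]. specialize (IHl _ H); lia. Qed.
Lemma fresh_notin : forall l, ~ In (S (maxl l)) l.
Proof. intros l H; apply maxl_in in H; lia. Qed.

Lemma uvars_app : forall G1 G2, uvars (G1 ++ G2) = uvars G1 ++ uvars G2.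
Proof. induction G1 as [|e G1 IH]; simpl; intros; auto; destruct e; simpl; rewrite ?IH; auto. Qed.
Lemma evars_app : forall G1 G2, evars (G1 ++ G2) = evars G1 ++ evars G2.
Proof. induction G1 as [|e G1 IH]; simpl; intros; auto; destruct e; simpl; rewrite ?IH; auto. Qed.
Lemma markers_app : forall G1 G2, markers (G1 ++ G2) = markers G1 ++ markers G2.
Proof. induction G1 as [|e G1 IH]; simpl; intros; auto; destruct e; simpl; rewrite ?IH; auto. Qed.

Lemma In_CUVar : forall P a, In (CUVar a) P <-> In a (uvars P).
Proof.
  induction P as [|e P IH]; simpl; intros; [tauto|].
  destruct e; simpl; rewrite IH; split; intuition congruence.
Qed.
Lemma In_CEx_evars : forall G c, In (CEx c) G -> In c (evars G).
Proof. induction G as [|e G IH]; simpl; intros; auto; destruct H; subst; simpl; auto; destruct e; simpl; auto. Qed.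
Lemma In_CSolved_evars : forall G c t, In (CSolved c t) G -> In c (evars G).
Proof. induction G as [|e G IH]; simpl; intros; auto; destruct H; subst; simpl; eauto; destruct e; simpl; eauto. Qed.
Lemma evars_cases : forall G c, In c (evars G) -> In (CEx c) G \/ exists t, In (CSolved c t) G.
Proof.
  induction G as [|e G IH]; simpl; intros; [contradiction|].
  destruct e; simpl in H; try destruct H as [H|H]; try (subst; eauto; fail);
    destruct (IH c H) as [?|[t' ?]]; eauto.
Qed.

Lemma wf_closed : forall G A k, wf_typ_at G k A -> closed_at k A.
Proof. induction A; simpl; intros; intuition. Qed.
Lemma wf_fv_u : forall G A k x, wf_typ_at G k A -> In x (fv_u A) -> In x (uvars G).
Proof.
  induction A; simpl; intros k x Hw Hin; try contradiction;
  [ destruct Hin as [<-|[]]; auto | eauto | destruct Hw; apply in_app_or in Hin; destruct Hin; eauto ].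
Qed.
Lemma wf_fv_e : forall G A k x, wf_typ_at G k A -> In x (fv_e A) -> In x (evars G).
Proof.
  induction A; simpl; intros k x Hw Hin; try contradiction;
  [ destruct Hin as [<-|[]]; auto | eauto | destruct Hw; apply in_app_or in Hin; destruct Hin; eauto ].
Qed.

Lemma dsub_no_bvar : forall P A B, dsub P A B -> (forall n, A <> TBVar n) /\ (forall n, B <> TBVar n).
Proof.
  induction 1; split; intros; try discriminate; firstorder.
Qed.

Lemma dsub_mono_eq : forall P A B, dsub P A B -> mono A -> mono B -> A = B.
Proof.
  induction 1; simpl; intros; try contradiction; auto.
  destruct H1, H2; f_equal; symmetry; auto.
  rewrite IHdsub2; auto.
Qed.

Lemma dsub_msz : forall P A B, dsub P A B -> (mono A -> msz B <= msz A) /\ (mono B -> msz A <= msz B).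
Proof.
  induction 1; simpl; split; intros; auto; try contradiction.
  - destruct H1; destruct IHdsub1, IHdsub2; specialize (H4 H1); specialize (H5 H2); lia.
  - destruct H1; destruct IHdsub1, IHdsub2; specialize (H3 H1); specialize (H6 H2); lia.
  - destruct IHdsub as [_ Hr]. pose proof (msz_open A 0 t). unfold open in *.
    specialize (Hr ltac:(assumption)). lia.
  - destruct IHdsub as [Hr _]. pose proof (msz_open B 0 (TFVar b)). unfold open in *.
    specialize (Hr ltac:(assumption)). lia.
Qed.

Lemma inv_mono_arr_r : forall P t B1 B2, dsub P t (TArr B1 B2) -> mono t ->
  exists t1 t2, t = TArr t1 t2 /\ dsub P B1 t1 /\ dsub P t2 B2.
Proof. intros. inversion H; subst; simpl in *; [eauto | contradiction]. Qed.

Lemma inv_mono_arr_l : forall P t A1 A2, dsub P (TArr A1 A2) t -> mono t ->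
  exists t1 t2, t = TArr t1 t2 /\ dsub P t1 A1 /\ dsub P A2 t2.
Proof. intros. inversion H; subst; simpl in *; [eauto | contradiction]. Qed.

Lemma inv_mono_all_r : forall P t B, dsub P t (TAll B) -> mono t ->
  exists b, fresh_u P b [t; B] /\ dsub (P ++ [CUVar b]) t (open B (TFVar b)).
Proof. intros. inversion H; subst; simpl in *; [contradiction | eauto]. Qed.

Lemma inv_mono_all_l : forall P t A, dsub P (TAll A) t -> mono t ->
  exists s, mono s /\ wf_typ P s /\ dsub P (open A s) t.
Proof. intros. inversion H; subst; simpl in *; [eauto | contradiction]. Qed.

Definition uv (e : entry) := match e with CUVar a => [a] | _ => [] end.
Definition ev (e : entry) := match e with CEx a => [a] | CSolved a _ => [a] | _ => [] end.
Lemma uvars_cons : forall e G, uvars (e :: G) = uv e ++ uvars G.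
Proof. destruct e; reflexivity. Qed.
Lemma evars_cons : forall e G, evars (e :: G) = ev e ++ evars G.
Proof. destruct e; reflexivity. Qed.

Definition ok_entry (th : nat -> typ) (U E : list nat) (e : entry) : Prop :=
  match e with
  | CEx b => forall x, In x (fv_u (th b)) -> In x U
  | CSolved b t => th b = sapp th t /\ (forall x, In x (fv_e t) -> In x E)
  | _ => True
  end.
Fixpoint okp th U E (G : ctx) : Prop :=
  match G with [] => True | e :: G' => ok_entry th U E e /\ okp th (U ++ uv e) (E ++ ev e) G' end.

Lemma okp_app : forall th G1 G2 U E,
  okp th U E (G1 ++ G2) <-> okp th U E G1 /\ okp th (U ++ uvars G1) (E ++ evars G1) G2.
Proof.
  induction G1 as [|e G1 IH]; cbn [app okp]; intros.
  - simpl; rewrite !app_nil_r; tauto.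
  - rewrite IH, uvars_cons, evars_cons, !app_assoc; tauto.
Qed.

Lemma okp_mono : forall G th U E U' E', (forall x, In x U -> In x U') -> (forall x, In x E -> In x E') ->
  okp th U E G -> okp th U' E' G.
Proof.
  induction G as [|e G IH]; simpl; intros; auto.
  destruct H1; split.
  - destruct e; simpl in *; intuition.
  - eapply IH; [| |eauto]; intros x Hx; apply in_app_or in Hx; apply in_or_app; intuition.
Qed.

Lemma okp_agree : forall G th th' U E, okp th U E G ->
  (forall c, In c E \/ In c (evars G) -> th' c = th c) -> okp th' U E G.
Proof.
  induction G as [|e G IH]; cbn [okp]; intros; auto.
  destruct H; split.
  - destruct e; simpl in *; auto.
    + rewrite (H0 n); [auto | right; simpl; auto].
    + destruct H; split.
      * rewrite (H0 n) by (right; simpl; auto). rewrite H.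
        apply sapp_agree; intros; symmetry; apply H0; left; auto.
      * auto.
  - apply IH with (th := th); [auto|]. intros c [Hc|Hc]; apply H0; rewrite evars_cons.
    + apply in_app_or in Hc; destruct Hc; auto; right; apply in_or_app; auto.
    + right; apply in_or_app; auto.
Qed.

Lemma okp_solved : forall G th U E b t, okp th U E G -> In (CSolved b t) G -> th b = sapp th t.
Proof.
  induction G as [|e G IH]; simpl; intros; [contradiction|].
  destruct H0; [subst; simpl in H; tauto | destruct H; eauto].
Qed.

Lemma okp_replace : forall th U E G1 G2 e e', okp th U E (G1 ++ e :: G2) ->
  ok_entry th (U ++ uvars G1) (E ++ evars G1) e' -> uv e' = uv e -> ev e' = ev e ->
  okp th U E (G1 ++ e' :: G2).
Proof.
  intros. apply okp_app in H; apply okp_app; destruct H as [H [_ H']]; simpl.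
  rewrite H1, H2; auto.
Qed.

Lemma apply_cons : forall e T A, apply_ctx (e :: T) A =
  match e with CSolved a t => subst_ex a t (apply_ctx T A) | _ => apply_ctx T A end.
Proof. reflexivity. Qed.

Lemma sapp_subst : forall th b t X, th b = sapp th t -> sapp th (subst_ex b t X) = sapp th X.
Proof.
  induction X; simpl; intros; auto.
  - destruct (Nat.eqb_spec b n); subst; auto.
  - f_equal; auto.
  - f_equal; auto.
Qed.

Lemma sapp_apply : forall th T A, (forall b t, In (CSolved b t) T -> th b = sapp th t) ->
  sapp th (apply_ctx T A) = sapp th A.
Proof.
  induction T as [|e T IH]; intros; auto.
  rewrite apply_cons. destruct e; try (apply IH; intros; apply H; simpl; auto).
  rewrite sapp_subst; [apply IH; intros; apply H; simpl; auto | apply H; simpl; auto].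
Qed.

Lemma fv_subst : forall b t Y c, In c (fv_e (subst_ex b t Y)) ->
  (In c (fv_e Y) /\ c <> b) \/ (In c (fv_e t) /\ In b (fv_e Y)).
Proof.
  induction Y; simpl; intros; auto.
  - destruct (Nat.eqb_spec b n); subst; simpl in *; auto.
    destruct H as [H|[]]; subst; auto.
  - apply in_app_or in H; destruct H as [H|H]; [destruct (IHY1 _ H) | destruct (IHY2 _ H)];
    intuition (auto using in_or_app).
Qed.

Lemma apply_closure : forall (X : nat -> Prop) T A,
  (forall b t, In (CSolved b t) T -> X b -> forall x, In x (fv_e t) -> X x) ->
  (forall x, In x (fv_e A) -> X x) -> forall x, In x (fv_e (apply_ctx T A)) -> X x.
Proof.
  induction T as [|e T IH]; intros; auto.
  rewrite apply_cons in H1. destruct e; try (eapply IH; eauto; intros; eapply H; simpl; eauto).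
  apply fv_subst in H1; destruct H1 as [[H1 _]|[H1 H2]].
  - eapply IH; eauto; intros; eapply H; simpl; eauto.
  - eapply H; [simpl; left; reflexivity | | exact H1].
    eapply IH; eauto; intros; eapply H; simpl; eauto.
Qed.

Lemma nodup_app_inv : forall (l1 l2 : list nat), NoDup (l1 ++ l2) ->
  NoDup l1 /\ NoDup l2 /\ (forall x, In x l1 -> ~ In x l2).
Proof.
  induction l1; simpl; intros.
  - repeat split; auto. constructor.
  - inversion H; subst. destruct (IHl1 _ H3) as [? [? ?]]. repeat split; auto.
    + constructor; auto. intro; apply H2; apply in_or_app; auto.
    + intros x [<-|Hx]; auto. intro; apply H2; apply in_or_app; auto.
Qed.

Lemma nodup_app_intro : forall (l1 l2 : list nat), NoDup l1 -> NoDup l2 ->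
  (forall x, In x l1 -> ~ In x l2) -> NoDup (l1 ++ l2).
Proof.
  induction l1; simpl; intros; auto.
  inversion H; subst. constructor.
  - intro Hx; apply in_app_or in Hx; destruct Hx; [contradiction | eapply H1; eauto].
  - apply IHl1; auto.
Qed.

Lemma apply_unsolved : forall T th U E A c, okp th U E T -> NoDup (E ++ evars T) ->
  In c (fv_e (apply_ctx T A)) ->
  (In c (fv_e A) \/ In c (E ++ evars T)) /\ (forall t, ~ In (CSolved c t) T).
Proof.
  induction T as [|e T IH]; intros th U E A c Hok Hnd Hin.
  - simpl in *. split; [left; auto | intros t []].
  - cbn [okp] in Hok. destruct Hok as [He Hok].
    assert (Hnd' : NoDup ((E ++ ev e) ++ evars T)) by (rewrite <- app_assoc, <- evars_cons; auto).
    rewrite apply_cons in Hin. rewrite evars_cons.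
    destruct e; simpl in *;
    try (destruct (IH _ _ _ _ _ Hok Hnd' Hin) as [H1 H2]; split;
         [ rewrite <- ?app_assoc in H1; simpl in H1; auto
         | intros t0 [Ht0|Ht0]; [discriminate | eapply H2; eauto]]; fail).
    apply fv_subst in Hin; destruct Hin as [[Hin Hne]|[Hin Hb]].
    + destruct (IH _ _ _ _ _ Hok Hnd' Hin) as [H1 H2]. split.
      * rewrite <- app_assoc in H1; simpl in H1; auto.
      * intros t0 [Ht0|Ht0]; [injection Ht0; intros; subst; congruence | eapply H2; eauto].
    + destruct He as [_ He]. apply He in Hin.
      apply nodup_app_inv in Hnd. destruct Hnd as [_ [Hnd Hd]]. specialize (Hd _ Hin).
      split; [right; apply in_or_app; auto|].
      intros t0 [Ht0|Ht0].
      * injection Ht0; intros; subst; apply Hd; simpl; auto.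
      * apply In_CSolved_evars in Ht0. apply Hd; simpl; auto.
Qed.

Lemma unsolved_CEx : forall G c, In c (evars G) -> (forall t, ~ In (CSolved c t) G) -> In (CEx c) G.
Proof. intros. destruct (evars_cases _ _ H) as [?|[t ?]]; auto. exfalso; eapply H0; eauto. Qed.

Lemma nodup_conflict : forall G c t, NoDup (evars G) -> In (CEx c) G -> In (CSolved c t) G -> False.
Proof.
  induction G as [|e G IH]; intros c t H H0 H1; [contradiction|].
  simpl in H0, H1. rewrite evars_cons in H. destruct H0 as [H0|H0]; destruct H1 as [H1|H1]; subst; try discriminate.
  - simpl in H; apply NoDup_cons_iff in H; destruct H as [Hn _]; apply Hn; eapply In_CSolved_evars; eauto.
  - simpl in H; apply NoDup_cons_iff in H; destruct H as [Hn _]; apply Hn; eapply In_CEx_evars; eauto.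
  - apply nodup_app_inv in H; destruct H as [_ [H _]]; eauto.
Qed.

Definition isE (e : entry) : Prop := match e with CEx _ | CSolved _ _ => True | _ => False end.
Inductive ext : ctx -> ctx -> Prop :=
| ext_nil : ext [] []
| ext_keep : forall e G D, ext G D -> ext (e :: G) (e :: D)
| ext_solve : forall a t G D, ext G D -> ext (CEx a :: G) (CSolved a t :: D)
| ext_new : forall e G D, isE e -> ext G D -> ext G (e :: D).

Lemma ext_refl : forall G, ext G G.
Proof. induction G; constructor; auto. Qed.

Lemma ext_app : forall G1 D1 G2 D2, ext G1 D1 -> ext G2 D2 -> ext (G1 ++ G2) (D1 ++ D2).
Proof. induction 1; simpl; intros; try constructor; auto. Qed.

Lemma ext_trans : forall T D, ext T D -> forall G, ext G T -> ext G D.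
Proof.
  induction 1; intros G0 HG.
  - auto.
  - inversion HG; subst.
    + apply ext_keep; auto.
    + apply ext_solve; auto.
    + apply ext_new; auto.
  - inversion HG; subst.
    + apply ext_solve; auto.
    + apply ext_new; simpl; auto.
  - apply ext_new; auto.
Qed.

Lemma ext_uvars : forall G D, ext G D -> uvars D = uvars G.
Proof. induction 1; auto; try (destruct e; simpl in *; try contradiction; congruence). Qed.
Lemma ext_markers : forall G D, ext G D -> markers D = markers G.
Proof. induction 1; auto; try (destruct e; simpl in *; try contradiction; congruence). Qed.
Lemma ext_evars : forall G D, ext G D -> forall x, In x (evars G) -> In x (evars D).
Proof.
  induction 1; intros x Hx; auto.
  - rewrite evars_cons in *; apply in_app_or in Hx; apply in_or_app; destruct Hx; auto.
  - simpl in *; destruct Hx; auto.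
  - rewrite evars_cons; apply in_or_app; auto.
Qed.

Definition isUM (e : entry) : Prop := match e with CUVar _ | CMarker _ => True | _ => False end.

Lemma ext_split : forall G X, ext G X -> forall G1 e G2, G = G1 ++ e :: G2 -> isUM e ->
  exists X1 X2, X = X1 ++ e :: X2 /\ ext G1 X1 /\ ext G2 X2.
Proof.
  induction 1; intros G1 e' G2 Heq Hum.
  - destruct G1; discriminate.
  - destruct G1 as [|f G1]; simpl in Heq; injection Heq; intros; subst.
    + exists [], D; repeat split; auto; constructor.
    + destruct (IHext _ _ _ eq_refl Hum) as [X1 [X2 [? [? ?]]]]; subst.
      exists (f :: X1), X2; repeat split; auto; constructor; auto.
  - destruct G1 as [|f G1]; simpl in Heq; injection Heq; intros; subst.
    + simpl in Hum; contradiction.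
    + destruct (IHext _ _ _ eq_refl Hum) as [X1 [X2 [? [? ?]]]]; subst.
      exists (CSolved a t :: X1), X2; repeat split; auto; constructor; auto.
  - destruct (IHext _ _ _ Heq Hum) as [X1 [X2 [? [? ?]]]]; subst.
    exists (e :: X1), X2; repeat split; auto; constructor; auto.
Qed.

Definition inS (S : list nat) (G : ctx) (x : nat) : Prop := In x S \/ ~ In x (evars G).
Definition fr_new (S : list nat) (G : ctx) (e : entry) : Prop :=
  match e with
  | CEx b => ~ In b (evars G)
  | CSolved b t => inS S G b /\ (forall x, In x (fv_e t) -> inS S G x)
  | _ => False
  end.
Definition frame (G : ctx) (S : list nat) (D : ctx) : Prop := forall e, In e D -> In e G \/ fr_new S G e.

Lemma frame_refl : forall G S, frame G S G.
Proof. unfold frame; auto. Qed.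

Lemma frame_comp : forall G S T S' D, frame G S T -> frame T S' D ->
  (forall x, In x (evars G) -> In x (evars T)) -> (forall x, In x S' -> inS S G x) -> frame G S D.
Proof.
  unfold frame; intros. destruct (H0 _ H3); auto.
  right. destruct e; simpl in *; try contradiction.
  - intro; apply H4; auto.
  - destruct H4 as [Hb Ht]; split.
    + destruct Hb as [Hb|Hb]; [auto | right; intro; apply Hb; auto].
    + intros x Hx; destruct (Ht _ Hx) as [Hy|Hy]; [auto | right; intro; apply Hy; auto].
Qed.

Lemma frame_keep : forall G S D c, frame G S D -> (forall x, In x (evars G) -> In x (evars D)) ->
  NoDup (evars G) -> In (CEx c) G -> ~ In c S -> In (CEx c) D.
Proof.
  intros. destruct (evars_cases D c) as [?|[t Ht]]; auto.
  - apply H0; eapply In_CEx_evars; eauto.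
  - exfalso. destruct (H _ Ht) as [Hg|Hn].
    + eapply nodup_conflict; eauto.
    + simpl in Hn. destruct Hn as [[Hc|Hc] _]; auto. apply Hc; eapply In_CEx_evars; eauto.
Qed.

Lemma frame_prefix : forall G M S S' X1 X2,
  frame (G ++ M) S' (X1 ++ X2) ->
  (forall e, In e M -> In e X1 -> False) ->
  (forall x, In x S' -> inS S G x) ->
  frame G S X1.
Proof.
  unfold frame; intros. destruct (H e) as [He|He]; [apply in_or_app; auto| |].
  - apply in_app_or in He; destruct He; auto. exfalso; eauto.
  - right. destruct e; simpl in *; try contradiction.
    + rewrite evars_app in He; intro; apply He; apply in_or_app; auto.
    + destruct He as [Hb Ht]; split.
      * destruct Hb as [Hb|Hb]; auto. right; rewrite evars_app in Hb; intro; apply Hb; apply in_or_app; auto.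
      * intros x Hx; destruct (Ht _ Hx) as [Hy|Hy]; auto. right; rewrite evars_app in Hy; intro; apply Hy; apply in_or_app; auto.
Qed.

Definition INV (G : ctx) (th : nat -> typ) : Prop :=
  okp th [] [] G /\ NoDup (evars G) /\ (forall c, mono (th c) /\ closed_at 0 (th c)).
Definition agree (G : ctx) (th th' : nat -> typ) : Prop := forall c, In c (evars G) -> th' c = th c.
Definition unsolvedIn (G : ctx) (A : typ) : Prop := forall c, In c (fv_e A) -> In (CEx c) G.
Definition upd (th : nat -> typ) (a : nat) (t : typ) : nat -> typ :=
  fun c => if Nat.eqb c a then t else th c.
Definition R (G : ctx) (th : nat -> typ) (D : ctx) (th' : nat -> typ) (S : list nat) : Prop :=
  INV D th' /\ ext G D /\ agree G th th' /\ frame G S D.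

Lemma upd_eq : forall th a t, upd th a t a = t.
Proof. unfold upd; intros; rewrite Nat.eqb_refl; auto. Qed.
Lemma upd_neq : forall th a t c, c <> a -> upd th a t c = th c.
Proof. unfold upd; intros; destruct (Nat.eqb_spec c a); congruence. Qed.

Lemma agree_refl : forall G th, agree G th th.
Proof. unfold agree; auto. Qed.

Lemma solve_gen : forall H1 H2 b t th S,
  INV (H1 ++ CEx b :: H2) th -> th b = sapp th t ->
  (forall x, In x (fv_e t) -> In x (evars H1)) -> In b S -> (forall x, In x (fv_e t) -> In x S) ->
  R (H1 ++ CEx b :: H2) th (H1 ++ CSolved b t :: H2) th S.
Proof.
  intros H1 H2 b t th S [Hok [Hnd Hth]] Hb Ht HbS HtS.
  assert (Hev : evars (H1 ++ CSolved b t :: H2) = evars (H1 ++ CEx b :: H2))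
    by (rewrite !evars_app; reflexivity).
  refine (conj (conj _ (conj _ _)) (conj _ (conj _ _))).
  - apply okp_replace with (e := CEx b); auto. simpl; split; auto.
  - rewrite Hev; auto.
  - apply Hth.
  - apply ext_app; [apply ext_refl | apply ext_solve; apply ext_refl].
  - apply agree_refl.
  - intros e He. apply in_app_or in He. destruct He as [He|[He|He]].
    + left; apply in_or_app; auto.
    + subst; right; simpl; split; [left; auto | intros; left; auto].
    + left; apply in_or_app; right; right; auto.
Qed.

Lemma in_ctx_split : forall G1 G2 a b, In (CEx b) (G1 ++ CEx a :: G2) -> b <> a ->
  In (CEx b) G1 \/ In (CEx b) G2.
Proof.
  intros. apply in_app_or in H. destruct H as [H|[H|H]]; auto. injection H; intros; congruence.
Qed.

Lemma in_ctx_arr : forall G1 G2 a c l, In (CEx c) (G1 ++ CEx a :: G2) -> c <> a ->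
  In (CEx c) (G1 ++ l ++ G2).
Proof.
  intros. destruct (in_ctx_split _ _ _ _ H H0); apply in_or_app; [left | right; apply in_or_app; right]; auto.
Qed.

Lemma arr_ctx_props : forall G1 G2 a th t1 t2 a1 a2 S,
  INV (G1 ++ CEx a :: G2) th -> th a = TArr t1 t2 ->
  ~ In a1 (evars (G1 ++ CEx a :: G2)) -> ~ In a2 (evars (G1 ++ CEx a :: G2)) -> a1 <> a2 -> In a S ->
  R (G1 ++ CEx a :: G2) th (G1 ++ [CEx a2; CEx a1; CSolved a (TArr (TEx a1) (TEx a2))] ++ G2)
    (upd (upd th a1 t1) a2 t2) S.
Proof.
  intros G1 G2 a th t1 t2 a1 a2 S [Hok [Hnd Hth]] Ha Ha1 Ha2 Hne HaS.
  rewrite evars_app in Ha1, Ha2. simpl in Ha1, Ha2.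
  assert (Haa1 : a <> a1) by (intro; subst; apply Ha1; apply in_or_app; simpl; auto).
  assert (Haa2 : a <> a2) by (intro; subst; apply Ha2; apply in_or_app; simpl; auto).
  set (th1 := upd (upd th a1 t1) a2 t2).
  assert (E1 : th1 a1 = t1) by (unfold th1; rewrite upd_neq, upd_eq; auto).
  assert (E2 : th1 a2 = t2) by (unfold th1; rewrite upd_eq; auto).
  assert (Eo : forall c, c <> a1 -> c <> a2 -> th1 c = th c)
    by (intros; unfold th1; rewrite !upd_neq; auto).
  assert (Hagr : forall c, In c (evars G1 ++ a :: evars G2) -> th1 c = th c).
  { intros c Hc; apply Eo; intro Heq; [apply Ha1|apply Ha2]; rewrite <- Heq; exact Hc. }
  specialize (Hth a) as Hma. rewrite Ha in Hma; destruct Hma as [[Hm1 Hm2] [Hc1 Hc2]].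
  apply okp_app in Hok. destruct Hok as [Hok1 Hok2]. simpl in Hok2. destruct Hok2 as [HokA Hok2].
  refine (conj (conj _ (conj _ _)) (conj _ (conj _ _))).
  - apply okp_app. split.
    + eapply okp_agree; eauto. intros c [Hc|Hc]; [contradiction|]. apply Hagr; apply in_or_app; auto.
    + simpl. repeat split.
      * rewrite E2; intros; apply HokA; rewrite Ha; simpl; apply in_or_app; right; auto.
      * rewrite E1; intros; rewrite app_nil_r; apply HokA; rewrite Ha; simpl; apply in_or_app; left; auto.
      * simpl. rewrite E1, E2, Eo by auto. auto.
      * intros x [<-|[<-|[]]]; rewrite <- !app_assoc; apply in_or_app; right; simpl; auto.
      * eapply okp_mono; [| | eapply okp_agree; [exact Hok2|]].
        -- intros x Hx; rewrite !app_nil_r in *; auto.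
        -- intros x Hx; rewrite <- !app_assoc; apply in_app_or in Hx; apply in_or_app;
           destruct Hx as [Hx|[<-|[]]]; [left; auto | right; simpl; auto].
        -- intros c Hc; apply Hagr. destruct Hc as [Hc|Hc];
           [apply in_app_or in Hc; destruct Hc as [Hc|[<-|[]]] | ]; apply in_or_app; simpl; auto.
  - rewrite evars_app; simpl. rewrite evars_app in Hnd; simpl in Hnd.
    apply Permutation_NoDup with (l := a2 :: a1 :: (evars G1 ++ a :: evars G2)).
    + eapply perm_trans; [| apply Permutation_middle]. apply perm_skip. apply Permutation_middle.
    + constructor; [intros [?|?]; [congruence | contradiction] | constructor; auto].
  - intros c; unfold th1, upd; destruct (Nat.eqb c a2); [auto|]; destruct (Nat.eqb c a1); [auto|apply Hth].
  - apply ext_app; [apply ext_refl|]. simpl. apply ext_new; [simpl; auto|]. apply ext_new; [simpl; auto|].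
    apply ext_solve, ext_refl.
  - intros c Hc. rewrite evars_app in Hc; apply Hagr; auto.
  - intros e He. apply in_app_or in He; destruct He as [He|He]; [left; apply in_or_app; auto|].
    simpl in He. destruct He as [<-|[<-|[<-|He]]].
    + right; simpl; rewrite evars_app; simpl; auto.
    + right; simpl; rewrite evars_app; simpl; auto.
    + right; simpl; split; [left; auto|]. intros x [<-|[<-|[]]]; right; rewrite evars_app; simpl; auto.
    + left; apply in_or_app; right; simpl; auto.
Qed.

Lemma arr_mid : forall G' T th1 th2 a1 a2 B1 B2,
  INV G' th1 -> INV T th2 -> ext G' T -> agree G' th1 th2 -> frame G' (a1 :: fv_e B1) T ->
  In (CEx a1) G' -> In (CEx a2) G' -> unsolvedIn G' B1 -> unsolvedIn G' B2 -> a2 <> a1 ->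
  ~ In a2 (fv_e B1) -> ~ In a2 (fv_e B2) ->
  In (CEx a2) T /\ unsolvedIn T (apply_ctx T B2) /\ ~ In a2 (fv_e (apply_ctx T B2)) /\
  th2 a2 = th1 a2 /\ sapp th2 (apply_ctx T B2) = sapp th1 B2 /\
  (forall x, In x (fv_e (apply_ctx T B2)) -> In x (a1 :: fv_e B1) \/ ~ In x (evars G') \/ In x (fv_e B2)).
Proof.
  intros G' T th1 th2 a1 a2 B1 B2 [Hok1 [Hnd1 Hth1]] [Hok2 [Hnd2 Hth2]] Hext Hagr Hfr Ha1 Ha2 HB1 HB2 Hne Hn1 Hn2.
  assert (Hcl : forall x, In x (fv_e (apply_ctx T B2)) ->
            In x (a1 :: fv_e B1) \/ ~ In x (evars G') \/ In x (fv_e B2)).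
  { apply apply_closure with (X := fun x => In x (a1 :: fv_e B1) \/ ~ In x (evars G') \/ In x (fv_e B2)).
    - intros b t Hbt Xb x Hx. destruct (Hfr _ Hbt) as [Hin|Hnew].
      + exfalso. assert (Hbe : In b (evars G')) by (eapply In_CSolved_evars; eauto).
        destruct Xb as [[Hb|Hb]|[Hb|Hb]].
        * rewrite <- Hb in Hin; exact (nodup_conflict _ _ _ Hnd1 Ha1 Hin).
        * exact (nodup_conflict _ _ _ Hnd1 (HB1 _ Hb) Hin).
        * contradiction.
        * exact (nodup_conflict _ _ _ Hnd1 (HB2 _ Hb) Hin).
      + simpl in Hnew. destruct Hnew as [_ Ht]. destruct (Ht x Hx) as [H|H]; [left | right; left]; auto.
    - intros; right; right; auto. }
  assert (Hev : forall x, In x (evars G') -> In x (evars T)) by (apply ext_evars; auto).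
  split; [|split; [|split; [|split; [|split]]]].
  - eapply frame_keep; eauto. intros [H|H]; auto.
  - intros c Hc. destruct (apply_unsolved T th2 [] [] B2 c Hok2 Hnd2 Hc) as [[H|H] Hns];
      apply unsolved_CEx; auto.
    apply Hev; apply In_CEx_evars; auto.
  - intro H; destruct (Hcl _ H) as [[H'|H']|[H'|H']]; auto.
    apply H'; apply In_CEx_evars; auto.
  - apply Hagr; apply In_CEx_evars; auto.
  - rewrite sapp_apply by (intros; eapply okp_solved; eauto).
    apply sapp_agree; intros; apply Hagr; apply In_CEx_evars; auto.
  - auto.
Qed.

Lemma okp_CEx_prefix : forall G1 G2 a th, INV (G1 ++ CEx a :: G2) th ->
  forall x, In x (fv_u (th a)) -> In x (uvars G1).
Proof.
  intros G1 G2 a th [Hok _]. apply okp_app in Hok. destruct Hok as [_ [H _]]. simpl in H. auto.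
Qed.

Lemma assoc_eq : forall G1 (x : entry) G3 (e : entry) G4,
  G1 ++ x :: G3 ++ e :: G4 = (G1 ++ x :: G3) ++ e :: G4.
Proof. intros; rewrite <- app_assoc; reflexivity. Qed.

Lemma fresh4 : forall l1 l2 l3 l4 : list nat,
  ~ In (S (maxl (l1 ++ l2 ++ l3 ++ l4))) l1 /\ ~ In (S (maxl (l1 ++ l2 ++ l3 ++ l4))) l2 /\
  ~ In (S (maxl (l1 ++ l2 ++ l3 ++ l4))) l3 /\ ~ In (S (maxl (l1 ++ l2 ++ l3 ++ l4))) l4.
Proof.
  intros. pose proof (fresh_notin (l1 ++ l2 ++ l3 ++ l4)) as H.
  repeat split; intro; apply H; repeat (apply in_or_app; first [left; assumption | right]); auto.
Qed.

Lemma INV_snoc_u : forall G th b, INV G th -> INV (G ++ [CUVar b]) th.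
Proof.
  intros G th b [Hok [Hnd Hth]]. split; [|split]; auto.
  - apply okp_app; split; auto. simpl; auto.
  - rewrite evars_app; simpl; rewrite app_nil_r; auto.
Qed.

Lemma INV_snoc_m : forall G th b s, INV G th -> ~ In b (evars G) -> mono s -> closed_at 0 s ->
  (forall x, In x (fv_u s) -> In x (uvars G)) ->
  INV (G ++ [CMarker b; CEx b]) (upd th b s).
Proof.
  intros G th b s [Hok [Hnd Hth]] Hb Hm Hc Hu. split; [|split].
  - apply okp_app; split.
    + eapply okp_agree; eauto. intros c [[]|Hc']. apply upd_neq; intro; subst; auto.
    + simpl. rewrite upd_eq. repeat split; auto. intros; rewrite !app_nil_r; auto.
  - rewrite evars_app; simpl. apply nodup_app_intro; auto.
    + constructor; auto; constructor.
    + intros x Hx [<-|[]]; auto.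
  - intros c; unfold upd; destruct (Nat.eqb c b); auto.
Qed.

Lemma trunc_u : forall G b th th1 X th' S S',
  R (G ++ [CUVar b]) th1 X th' S' -> agree G th th1 -> ~ In b (uvars G) ->
  (forall x, In x S' -> inS S G x) ->
  exists X1 X2, X = X1 ++ CUVar b :: X2 /\ R G th X1 th' S.
Proof.
  intros G b th th1 X th' S S' [[Hok [Hnd Hth]] [Hext [Hagr Hfr]]] Hag Hb HS.
  destruct (ext_split _ _ Hext G (CUVar b) [] eq_refl I) as [X1 [X2 [HX [He1 He2]]]]. subst X.
  exists X1, X2; split; auto.
  split; [split; [|split] | split; [|split]]; auto.
  - apply okp_app in Hok; tauto.
  - rewrite evars_app in Hnd; apply nodup_app_inv in Hnd; tauto.
  - intros c Hc. rewrite Hagr, Hag; auto. rewrite evars_app; apply in_or_app; auto.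
  - eapply frame_prefix with (M := [CUVar b]); eauto.
    intros e [<-|[]] He. apply Hb. rewrite <- (ext_uvars _ _ He1). apply In_CUVar; auto.
Qed.

Lemma trunc_m : forall G b th th1 X th' S S',
  R (G ++ [CMarker b; CEx b]) th1 X th' S' -> agree G th th1 -> ~ In b (markers G) ->
  (forall x, In x S' -> inS S G x) ->
  exists X1 X2, X = X1 ++ CMarker b :: X2 /\ R G th X1 th' S.
Proof.
  intros G b th th1 X th' S S' [[Hok [Hnd Hth]] [Hext [Hagr Hfr]]] Hag Hb HS.
  destruct (ext_split _ _ Hext G (CMarker b) [CEx b] eq_refl I) as [X1 [X2 [HX [He1 He2]]]]. subst X.
  exists X1, X2; split; auto.
  rewrite evars_app in Hnd; apply nodup_app_inv in Hnd. destruct Hnd as [N1 [N2 N3]].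
  split; [split; [|split] | split; [|split]]; auto.
  - apply okp_app in Hok; tauto.
  - intros c Hc. rewrite Hagr, Hag; auto. rewrite evars_app; apply in_or_app; auto.
  - eapply frame_prefix with (M := [CMarker b; CEx b]); eauto.
    intros e [<-|[<-|[]]] He.
    + apply Hb. rewrite <- (ext_markers _ _ He1).
      clear -He. induction X1 as [|f X1 IH]; simpl in *; auto. destruct He; subst; simpl; auto.
      destruct f; simpl; auto.
    + apply (N3 b); [eapply In_CEx_evars; eauto|]. simpl.
      apply (ext_evars _ _ He2); simpl; auto.
Qed.

Lemma R_comp3 : forall G th G' th1 T th2 D th3 S S1 S2,
  R G th G' th1 S -> R G' th1 T th2 S1 -> R T th2 D th3 S2 ->
  (forall x, In x S1 -> inS S G x) -> (forall x, In x S2 -> inS S G x) -> R G th D th3 S.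
Proof.
  intros G th G' th1 T th2 D th3 S S1 S2 [I1 [E1 [A1 F1]]] [I2 [E2 [A2 F2]]] [I3 [E3 [A3 F3]]] H1 H2.
  assert (V1 := ext_evars _ _ E1). assert (V2 := ext_evars _ _ E2).
  split; [auto | split; [| split]].
  - eapply ext_trans; [eauto|]. eapply ext_trans; eauto.
  - intros c Hc. rewrite A3, A2, A1; auto.
  - eapply frame_comp; [eapply frame_comp; eauto | eauto | auto | auto].
Qed.

Lemma inst_complete : forall n m G th a B P,
  INV G th -> uvars P = uvars G -> evars P = [] -> In (CEx a) G -> unsolvedIn G B -> ~ In a (fv_e B) ->
  tsize (th a) <= n -> tsize B <= m ->
  (dsub P (th a) (sapp th B) -> exists D th', inst_l G a B D /\ R G th D th' (a :: fv_e B)) /\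
  (dsub P (sapp th B) (th a) -> exists D th', inst_r G B a D /\ R G th D th' (a :: fv_e B)).
Proof.
  induction n as [|n IHn].
  { intros; pose proof (tsize_pos (th a)); lia. }
  induction m as [|m IHm].
  { intros; pose proof (tsize_pos B); lia. }
  intros G th a B P HI HuP HeP Ha HB HaB Hn Hm.
  pose proof HI as [Hok [Hnd Hth]].
  destruct (in_split _ _ Ha) as [G1 [G2 HG]].
  destruct (Hth a) as [Hmono Hclo].
  destruct B as [ | k | bb | b | B0 | B1 B2 ].
  - subst G.
    split; intros Hd; simpl in Hd.
    + pose proof (dsub_mono_eq _ _ _ Hd Hmono I) as E.
      exists (G1 ++ CSolved a TUnit :: G2), th. split.
      * apply instl_solve; unfold wf_typ; simpl; auto.
      * apply solve_gen; simpl; auto; try contradiction.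
    + pose proof (dsub_mono_eq _ _ _ Hd I Hmono) as E.
      exists (G1 ++ CSolved a TUnit :: G2), th. split.
      * apply instr_solve; unfold wf_typ; simpl; auto.
      * apply solve_gen; simpl; auto; try contradiction.
  - subst G.
    split; intros Hd; simpl in Hd; apply dsub_no_bvar in Hd; destruct Hd as [H1 H2];
      exfalso; [eapply H2 | eapply H1]; eauto.
  - subst G.
    split; intros Hd; simpl in Hd.
    + pose proof (dsub_mono_eq _ _ _ Hd Hmono I) as E.
      exists (G1 ++ CSolved a (TFVar bb) :: G2), th. split.
      * apply instl_solve; unfold wf_typ; simpl; auto. eapply okp_CEx_prefix; eauto. rewrite E; simpl; auto.
      * apply solve_gen; simpl; auto; try contradiction.
    + pose proof (dsub_mono_eq _ _ _ Hd I Hmono) as E.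
      exists (G1 ++ CSolved a (TFVar bb) :: G2), th. split.
      * apply instr_solve; unfold wf_typ; simpl; auto. eapply okp_CEx_prefix; eauto. rewrite <- E; simpl; auto.
      * apply solve_gen; simpl; auto; try contradiction.
  - subst G.
    assert (Hba : b <> a) by (intro; subst; apply HaB; simpl; auto).
    assert (Hbm : mono (th b)) by apply Hth.
    assert (HbG := HB b (or_introl eq_refl)).
    assert (HR1 : In (CEx b) G1 -> th a = th b ->
              R (G1 ++ CEx a :: G2) th (G1 ++ CSolved a (TEx b) :: G2) th (a :: fv_e (TEx b))).
    { intros Hb1 E. apply solve_gen; simpl; auto; intros x [<-|[]]; auto; eapply In_CEx_evars; eauto. }
    assert (HR2 : forall G3 G4, G2 = G3 ++ CEx b :: G4 -> th a = th b ->
              R (G1 ++ CEx a :: G3 ++ CEx b :: G4) th (G1 ++ CEx a :: G3 ++ CSolved b (TEx a) :: G4) th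
                (a :: fv_e (TEx b))).
    { intros G3 G4 HG2 E. subst G2. rewrite (assoc_eq G1 (CEx a) G3 (CEx b) G4),
        (assoc_eq G1 (CEx a) G3 (CSolved b (TEx a)) G4).
      apply solve_gen; simpl; auto.
      all: try (rewrite <- assoc_eq; auto).
      all: intros x [<-|[]]; auto; rewrite evars_app; apply in_or_app; simpl; auto. }
    split; intros Hd; simpl in Hd.
    + pose proof (dsub_mono_eq _ _ _ Hd Hmono Hbm) as E.
      destruct (in_ctx_split _ _ _ _ HbG Hba) as [Hb1|Hb2].
      * exists (G1 ++ CSolved a (TEx b) :: G2), th. split; auto.
        apply instl_solve; unfold wf_typ; simpl; auto. eapply In_CEx_evars; eauto.
      * destruct (in_split _ _ Hb2) as [G3 [G4 HG2]].
        exists (G1 ++ CEx a :: G3 ++ CSolved b (TEx a) :: G4), th. subst G2. split; auto.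
        apply instl_reach.
    + pose proof (dsub_mono_eq _ _ _ Hd Hbm Hmono) as E. symmetry in E.
      destruct (in_ctx_split _ _ _ _ HbG Hba) as [Hb1|Hb2].
      * exists (G1 ++ CSolved a (TEx b) :: G2), th. split; auto.
        apply instr_solve; unfold wf_typ; simpl; auto. eapply In_CEx_evars; eauto.
      * destruct (in_split _ _ Hb2) as [G3 [G4 HG2]].
        exists (G1 ++ CEx a :: G3 ++ CSolved b (TEx a) :: G4), th. subst G2. split; auto.
        apply instr_reach.
  -
    split; intros Hd; simpl in Hd.
    + destruct (inv_mono_all_r _ _ _ Hd Hmono) as [b [[Hbu Hbf] Hd']].
      rewrite Forall_forall in Hbf.
      assert (Hb0 : ~ In b (fv_u (sapp th B0))) by (apply Hbf; simpl; auto).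
      assert (Hb0' : ~ In b (fv_u B0)) by (intro; apply Hb0; apply fv_u_sapp; auto).
      assert (HbG : ~ In b (uvars G)) by (rewrite <- HuP; auto).
      assert (I1 : INV (G ++ [CUVar b]) th) by (apply INV_snoc_u; auto).
      assert (U1 : uvars (P ++ [CUVar b]) = uvars (G ++ [CUVar b])) by (rewrite !uvars_app, HuP; auto).
      assert (E1 : evars (P ++ [CUVar b]) = []) by (rewrite evars_app, HeP; auto).
      assert (A1 : In (CEx a) (G ++ [CUVar b])) by (apply in_or_app; auto).
      assert (Un1 : unsolvedIn (G ++ [CUVar b]) (open B0 (TFVar b))).
      { intros c Hc; unfold open in Hc; rewrite fv_e_open_fvar in Hc; apply in_or_app; left; auto. }
      assert (Oc1 : ~ In a (fv_e (open B0 (TFVar b)))) by (unfold open; rewrite fv_e_open_fvar; auto).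
      assert (Sz1 : tsize (open B0 (TFVar b)) <= m) by (unfold open; rewrite tsize_open by auto; simpl in Hm; lia).
      assert (Sz2 : tsize (th a) <= S n) by auto.
      assert (Hd1 : dsub (P ++ [CUVar b]) (th a) (sapp th (open B0 (TFVar b)))).
      { unfold open; rewrite sapp_open by (intros; apply Hth). simpl. exact Hd'. }
      destruct (IHm _ _ _ _ _ I1 U1 E1 A1 Un1 Oc1 Sz2 Sz1) as [IH1 _].
      destruct (IH1 Hd1) as [X [th' [Hinst HR]]].
      destruct (trunc_u G b th th X th' (a :: fv_e (TAll B0)) _ HR (agree_refl _ _) HbG) as [X1 [X2 [HX HR1]]].
      { intros x [<-|Hx]; left; simpl; auto. unfold open in Hx; rewrite fv_e_open_fvar in Hx; auto. }
      exists X1, th'; split; auto.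
      subst X; eapply instl_allR; eauto. split; auto.
    + destruct (inv_mono_all_l _ _ _ Hd Hmono) as [s [Hsm [Hsw Hd']]].
      destruct (fresh4 (evars G) (markers G) (fv_e B0) [a]) as [Hf1 [Hf2 [Hf3 Hf4]]].
      set (b := S (maxl (evars G ++ markers G ++ fv_e B0 ++ [a]))) in *.
      assert (Hab : a <> b) by (intro; apply Hf4; simpl; auto).
      set (th1 := upd th b s).
      assert (I1 : INV (G ++ [CMarker b; CEx b]) th1).
      { apply INV_snoc_m; auto. eapply wf_closed; eauto. intros; rewrite <- HuP; eapply wf_fv_u; eauto. }
      assert (Hth1a : th1 a = th a) by (apply upd_neq; auto).
      assert (Eb : th1 b = s) by (apply upd_eq).
      assert (U1 : uvars P = uvars (G ++ [CMarker b; CEx b])) by (rewrite uvars_app, HuP; simpl; rewrite app_nil_r; auto).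
      assert (A1 : In (CEx a) (G ++ [CMarker b; CEx b])) by (apply in_or_app; auto).
      assert (Un1 : unsolvedIn (G ++ [CMarker b; CEx b]) (open B0 (TEx b))).
      { intros c Hc. unfold open in Hc. destruct (fv_e_open_ex _ _ _ _ Hc) as [Heq|Hc'];
        apply in_or_app; [right; rewrite Heq; simpl; auto | left; apply HB; exact Hc']. }
      assert (Oc1 : ~ In a (fv_e (open B0 (TEx b)))).
      { intro Hc. unfold open in Hc. destruct (fv_e_open_ex _ _ _ _ Hc) as [Heq|Hc']; auto. }
      assert (Sz1 : tsize (open B0 (TEx b)) <= m) by (unfold open; rewrite tsize_open by auto; simpl in Hm; lia).
      assert (Sz2 : tsize (th1 a) <= S n) by (rewrite Hth1a; auto).
      assert (Hth1c : forall c, closed_at 0 (th1 c)) by (intros; apply I1).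
      assert (Hd1 : dsub P (sapp th1 (open B0 (TEx b))) (th1 a)).
      { unfold open; rewrite sapp_open by auto. simpl. rewrite Eb, Hth1a.
        rewrite (sapp_agree th1 th B0). exact Hd'. intros c Hc; apply upd_neq; intro Heq; apply Hf3; rewrite <- Heq; auto. }
      destruct (IHm _ _ _ _ _ I1 U1 HeP A1 Un1 Oc1 Sz2 Sz1) as [_ IH2].
      destruct (IH2 Hd1) as [X [th' [Hinst HR]]].
      destruct (trunc_m G b th th1 X th' (a :: fv_e (TAll B0)) _ HR) as [X1 [X2 [HX HR1]]].
      * intros c Hc; apply upd_neq; intro Heq; apply Hf1; rewrite <- Heq; auto.
      * auto.
      * intros x [<-|Hx]; [left; left; auto|]. unfold open in Hx.
        destruct (fv_e_open_ex _ _ _ _ Hx) as [Heq|Hx']; [right; rewrite Heq; auto | left; right; auto].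
      * exists X1, th'; split; auto. subst X. eapply instr_allL; eauto. split; [auto|split; [auto|]].
        constructor; auto.
  - subst G.
    simpl in HaB. rewrite in_app_iff in HaB.
    destruct (fresh4 (evars (G1 ++ CEx a :: G2)) (markers (G1 ++ CEx a :: G2)) (fv_e B1) (fv_e B2))
      as [Hf1 [Hf2 [Hf3 Hf4]]].
    set (a1 := S (maxl (evars (G1 ++ CEx a :: G2) ++ markers (G1 ++ CEx a :: G2) ++ fv_e B1 ++ fv_e B2))) in *.
    destruct (fresh4 (a1 :: evars (G1 ++ CEx a :: G2)) (markers (G1 ++ CEx a :: G2)) (fv_e B1) (fv_e B2))
      as [Hg1 [Hg2 [Hg3 Hg4]]].
    set (a2 := S (maxl ((a1 :: evars (G1 ++ CEx a :: G2)) ++ markers (G1 ++ CEx a :: G2) ++ fv_e B1 ++ fv_e B2))) in *.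
    assert (Hna2 : ~ In a2 (evars (G1 ++ CEx a :: G2))) by (intro; apply Hg1; right; auto).
    assert (Hne : a1 <> a2) by (intro Heq; apply Hg1; left; auto).
    assert (Hne' : a2 <> a1) by auto.
    assert (Hae : In a (evars (G1 ++ CEx a :: G2))) by (apply In_CEx_evars; auto).
    assert (Ha1a : a1 <> a) by (intro Heq; apply Hf1; rewrite Heq; auto).
    assert (Ha2a : a2 <> a) by (intro Heq; apply Hna2; rewrite Heq; auto).
    set (G' := G1 ++ [CEx a2; CEx a1; CSolved a (TArr (TEx a1) (TEx a2))] ++ G2).
    assert (HA1 : In (CEx a1) G') by (apply in_or_app; right; simpl; auto).
    assert (HA2 : In (CEx a2) G') by (apply in_or_app; right; simpl; auto).
    assert (HB1' : unsolvedIn G' B1).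
    { intros c Hc; apply in_ctx_arr with (a := a); [apply HB; simpl; apply in_or_app; auto|].
      intro Heq; apply HaB; left; rewrite <- Heq; auto. }
    assert (HB2' : unsolvedIn G' B2).
    { intros c Hc; apply in_ctx_arr with (a := a); [apply HB; simpl; apply in_or_app; auto|].
      intro Heq; apply HaB; right; rewrite <- Heq; auto. }
    assert (HfrA1 : fresh_e (G1 ++ CEx a :: G2) a1 [B1; B2]).
    { split; [auto | split; [auto | repeat constructor; auto]]. }
    assert (HfrA2 : fresh_e (G1 ++ CEx a :: G2) a2 [B1; B2]).
    { split; [auto | split; [auto | repeat constructor; auto]]. }
    assert (HS1 : forall x, In x (a1 :: fv_e B1) -> inS (a :: fv_e (TArr B1 B2)) (G1 ++ CEx a :: G2) x).
    { intros x [<-|Hx]; [right; exact Hf1 | left; right; simpl; apply in_or_app; left; exact Hx]. }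
    split; intros Hd; simpl in Hd.
    + destruct (inv_mono_arr_r _ _ _ _ Hd Hmono) as [t1 [t2 [Ht [Hd1 Hd2]]]].
      pose proof (arr_ctx_props G1 G2 a th t1 t2 a1 a2 (a :: fv_e (TArr B1 B2)) HI Ht Hf1 Hna2 Hne
                    (or_introl eq_refl)) as R0.
      fold G' in R0.
      set (th1 := upd (upd th a1 t1) a2 t2) in *.
      assert (Et1 : th1 a1 = t1) by (unfold th1; rewrite upd_neq, upd_eq; auto).
      assert (Et2 : th1 a2 = t2) by (unfold th1; rewrite upd_eq; auto).
      pose proof R0 as [I0 [X0 [Ag0 F0]]].
      assert (U0 : uvars P = uvars G') by (rewrite (ext_uvars _ _ X0); auto).
      rewrite Ht in Hn; simpl in Hn.
      assert (Hs1 : sapp th1 B1 = sapp th B1).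
      { apply sapp_agree; intros c Hc; apply Ag0; apply In_CEx_evars; apply HB; simpl; apply in_or_app; auto. }
      assert (Hs2 : sapp th1 B2 = sapp th B2).
      { apply sapp_agree; intros c Hc; apply Ag0; apply In_CEx_evars; apply HB; simpl; apply in_or_app; auto. }
      assert (Sz1 : tsize (th1 a1) <= n) by (rewrite Et1; lia).
      destruct (IHn (tsize B1) G' th1 a1 B1 P I0 U0 HeP HA1 HB1' Hf3 Sz1 (le_n _)) as [_ IR].
      destruct (IR ltac:(rewrite Hs1, Et1; exact Hd1)) as [T [th2 [Hi1 R1]]].
      pose proof R1 as [I2 [X2 [Ag2 F2]]].
      destruct (arr_mid G' T th1 th2 a1 a2 B1 B2 I0 I2 X2 Ag2 F2 HA1 HA2 HB1' HB2' Hne' Hg3 Hg4)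
        as [C1 [C2 [C3 [C4 [C5 C6]]]]].
      assert (U2 : uvars P = uvars T) by (rewrite (ext_uvars _ _ X2); auto).
      assert (Sz2 : tsize (th2 a2) <= n) by (rewrite C4, Et2; lia).
      destruct (IHn (tsize (apply_ctx T B2)) T th2 a2 (apply_ctx T B2) P I2 U2 HeP C1 C2 C3 Sz2 (le_n _))
        as [IL _].
      destruct (IL ltac:(rewrite C4, C5, Et2, Hs2; exact Hd2)) as [D [th3 [Hi2 R2]]].
      exists D, th3. split.
      * eapply instl_arr with (a1 := a1) (a2 := a2); eauto.
      * eapply R_comp3; [exact R0 | exact R1 | exact R2 | exact HS1 |].
        intros x [<-|Hx]; [right; exact Hna2|].
        destruct (C6 x Hx) as [Hy|[Hy|Hy]].
        -- apply HS1; auto.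
        -- right; intro; apply Hy; apply (ext_evars _ _ X0); auto.
        -- left; right; simpl; apply in_or_app; right; exact Hy.
    + destruct (inv_mono_arr_l _ _ _ _ Hd Hmono) as [t1 [t2 [Ht [Hd1 Hd2]]]].
      pose proof (arr_ctx_props G1 G2 a th t1 t2 a1 a2 (a :: fv_e (TArr B1 B2)) HI Ht Hf1 Hna2 Hne
                    (or_introl eq_refl)) as R0.
      fold G' in R0.
      set (th1 := upd (upd th a1 t1) a2 t2) in *.
      assert (Et1 : th1 a1 = t1) by (unfold th1; rewrite upd_neq, upd_eq; auto).
      assert (Et2 : th1 a2 = t2) by (unfold th1; rewrite upd_eq; auto).
      pose proof R0 as [I0 [X0 [Ag0 F0]]].
      assert (U0 : uvars P = uvars G') by (rewrite (ext_uvars _ _ X0); auto).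
      rewrite Ht in Hn; simpl in Hn.
      assert (Hs1 : sapp th1 B1 = sapp th B1).
      { apply sapp_agree; intros c Hc; apply Ag0; apply In_CEx_evars; apply HB; simpl; apply in_or_app; auto. }
      assert (Hs2 : sapp th1 B2 = sapp th B2).
      { apply sapp_agree; intros c Hc; apply Ag0; apply In_CEx_evars; apply HB; simpl; apply in_or_app; auto. }
      assert (Sz1 : tsize (th1 a1) <= n) by (rewrite Et1; lia).
      destruct (IHn (tsize B1) G' th1 a1 B1 P I0 U0 HeP HA1 HB1' Hf3 Sz1 (le_n _)) as [IL _].
      destruct (IL ltac:(rewrite Hs1, Et1; exact Hd1)) as [T [th2 [Hi1 R1]]].
      pose proof R1 as [I2 [X2 [Ag2 F2]]].
      destruct (arr_mid G' T th1 th2 a1 a2 B1 B2 I0 I2 X2 Ag2 F2 HA1 HA2 HB1' HB2' Hne' Hg3 Hg4)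
        as [C1 [C2 [C3 [C4 [C5 C6]]]]].
      assert (U2 : uvars P = uvars T) by (rewrite (ext_uvars _ _ X2); auto).
      assert (Sz2 : tsize (th2 a2) <= n) by (rewrite C4, Et2; lia).
      destruct (IHn (tsize (apply_ctx T B2)) T th2 a2 (apply_ctx T B2) P I2 U2 HeP C1 C2 C3 Sz2 (le_n _))
        as [_ IR].
      destruct (IR ltac:(rewrite C4, C5, Et2, Hs2; exact Hd2)) as [D [th3 [Hi2 R2]]].
      exists D, th3. split.
      * eapply instr_arr with (a1 := a1) (a2 := a2); eauto.
      * eapply R_comp3; [exact R0 | exact R1 | exact R2 | exact HS1 |].
        intros x [<-|Hx]; [right; exact Hna2|].
        destruct (C6 x Hx) as [Hy|[Hy|Hy]].
        -- apply HS1; auto.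
        -- right; intro; apply Hy; apply (ext_evars _ _ X0); auto.
        -- left; right; simpl; apply in_or_app; right; exact Hy.
Qed.

Definition Rm (G : ctx) (th : nat -> typ) (D : ctx) (th' : nat -> typ) : Prop :=
  INV D th' /\ ext G D /\ agree G th th'.

Lemma typ_eq_dec : forall A B : typ, {A = B} + {A <> B}.
Proof. decide equality; apply Nat.eq_dec. Qed.

Lemma occurs_strict : forall th A a, In a (fv_e A) -> (forall b, A <> TEx b) -> (forall C, A <> TAll C) ->
  msz (th a) < msz (sapp th A).
Proof.
  destruct A; simpl; intros; try contradiction.
  - exfalso; eapply H0; eauto.
  - exfalso; eapply H1; eauto.
  - apply in_app_or in H; destruct H as [H|H]; pose proof (msz_sapp_in th _ _ H); lia.
Qed.

Lemma ex_case : forall G th A B P, INV G th -> uvars P = uvars G -> evars P = [] ->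
  unsolvedIn G A -> unsolvedIn G B ->
  (forall C, A <> TAll C) -> (forall C, B <> TAll C) -> (exists a, A = TEx a \/ B = TEx a) ->
  dsub P (sapp th A) (sapp th B) -> exists D th', asub G A B D /\ Rm G th D th'.
Proof.
  intros G th A B P HI HuP HeP HA HB HnA HnB [a Ha] Hd.
  pose proof HI as [_ [_ Hth]].
  destruct (dsub_msz _ _ _ Hd) as [Ms1 Ms2].
  assert (Hcase : (exists a', A = TEx a') \/ (forall a', A <> TEx a'))
    by (destruct A; [right|right|right|left; eauto|right|right]; intros; discriminate).
  destruct Hcase as [[a' ->]|HnotA].
  - simpl in *. destruct (Hth a') as [Hm _].
    assert (Hin : In (CEx a') G) by (apply HA; simpl; auto).
    destruct (typ_eq_dec B (TEx a')) as [-> | HBne].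
    + exists G, th. split; [apply asub_ex; auto|]. split; [auto|split; [apply ext_refl | apply agree_refl]].
    + assert (Hoc : ~ In a' (fv_e B)).
      { intro Hi. specialize (Ms1 Hm). assert (msz (th a') < msz (sapp th B)); [|lia].
        apply occurs_strict; auto. intros b Hb; subst; simpl in Hi; destruct Hi as [Hi|[]]; subst; auto. }
      destruct (inst_complete (tsize (th a')) (tsize B) G th a' B P HI HuP HeP Hin HB Hoc (le_n _) (le_n _))
        as [IL _].
      destruct (IL Hd) as [D [th' [Hi [HI2 [X [Ag _]]]]]].
      exists D, th'; split; [apply asub_instL; auto | split; auto].
  - destruct Ha as [Ha | ->]; [exfalso; eapply HnotA; eauto|].
    simpl in *. destruct (Hth a) as [Hm _].
    assert (Hin : In (CEx a) G) by (apply HB; simpl; auto).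
    assert (Hoc : ~ In a (fv_e A)).
    { intro Hi. specialize (Ms2 Hm). assert (msz (th a) < msz (sapp th A)); [|lia].
      apply occurs_strict; auto. }
    destruct (inst_complete (tsize (th a)) (tsize A) G th a A P HI HuP HeP Hin HA Hoc (le_n _) (le_n _))
      as [_ IR].
    destruct (IR Hd) as [D [th' [Hi [HI2 [X [Ag _]]]]]].
    exists D, th'; split; [apply asub_instR; auto | split; auto].
Qed.

Lemma rtrunc : forall G e M th th1 X th', Rm (G ++ e :: M) th1 X th' -> isUM e -> agree G th th1 ->
  exists X1 X2, X = X1 ++ e :: X2 /\ Rm G th X1 th'.
Proof.
  intros G e M th th1 X th' [[Hok [Hnd Hth]] [Hext Hagr]] He Hag.
  destruct (ext_split _ _ Hext G e M eq_refl He) as [X1 [X2 [HX [He1 He2]]]]. subst X.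
  exists X1, X2; split; auto.
  split; [split; [|split] | split]; auto.
  - apply okp_app in Hok; tauto.
  - rewrite evars_app in Hnd; apply nodup_app_inv in Hnd; tauto.
  - intros c Hc. rewrite Hagr, Hag; auto. rewrite evars_app; apply in_or_app; auto.
Qed.

Lemma unsolved_apply : forall T th A, INV T th -> (forall c, In c (fv_e A) -> In c (evars T)) ->
  unsolvedIn T (apply_ctx T A).
Proof.
  intros T th A [Hok [Hnd _]] H c Hc.
  destruct (apply_unsolved T th [] [] A c Hok Hnd Hc) as [[H1|H1] H2]; apply unsolved_CEx; auto.
Qed.

Lemma notall_sapp : forall th A X, sapp th A = X -> (forall C, X <> TAll C) -> forall C, A <> TAll C.
Proof. intros; intro; subst; simpl in *; eapply H0; eauto. Qed.

Lemma ex_dec : forall A B : typ, (exists a, A = TEx a \/ B = TEx a) \/ ((forall a, A <> TEx a) /\ (forall a, B <> TEx a)).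
Proof.
  intros; destruct A; destruct B; first [left; eauto; fail | right; split; intros; discriminate].
Qed.

Lemma asub_complete : forall P X Y, dsub P X Y -> forall G th A B,
  X = sapp th A -> Y = sapp th B -> INV G th -> uvars P = uvars G -> evars P = [] ->
  unsolvedIn G A -> unsolvedIn G B -> exists D th', asub G A B D /\ Rm G th D th'.
Proof.
  induction 1; intros G th A0 B0 HX HY HI HuP HeP HA HB.
  -
    destruct (ex_dec A0 B0) as [Hex|[HnA HnB]].
    + eapply ex_case; eauto.
      all: first [ eapply notall_sapp; [symmetry; eassumption | intros C Hc; discriminate]
                 | rewrite <- HX, <- HY; constructor; auto ].
    + destruct A0; simpl in HX; try discriminate; try (exfalso; eapply HnA; eauto; fail).
      destruct B0; simpl in HY; try discriminate; try (exfalso; eapply HnB; eauto; fail).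
      injection HX; injection HY; intros; subst.
      exists G, th; split; [apply asub_var; apply In_CUVar; rewrite <- HuP; apply In_CUVar; auto|].
      split; [auto | split; [apply ext_refl | apply agree_refl]].
  -
    destruct (ex_dec A0 B0) as [Hex|[HnA HnB]].
    + eapply ex_case; eauto.
      all: first [ eapply notall_sapp; [symmetry; eassumption | intros C Hc; discriminate]
                 | rewrite <- HX, <- HY; constructor; auto ].
    + destruct A0; simpl in HX; try discriminate; try (exfalso; eapply HnA; eauto; fail).
      destruct B0; simpl in HY; try discriminate; try (exfalso; eapply HnB; eauto; fail).
      exists G, th; split; [apply asub_unit|].
      split; [auto | split; [apply ext_refl | apply agree_refl]].
  -
    destruct (ex_dec A0 B0) as [Hex|[HnA HnB]].
    + eapply ex_case; eauto.
      all: first [ eapply notall_sapp; [symmetry; eassumption | intros C Hc; discriminate]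
                 | rewrite <- HX, <- HY; constructor; auto ].
    + destruct A0 as [| | | | |A1' A2']; simpl in HX; try discriminate; try (exfalso; eapply HnA; eauto; fail).
      destruct B0 as [| | | | |B1' B2']; simpl in HY; try discriminate; try (exfalso; eapply HnB; eauto; fail).
      injection HX; injection HY; intros; subst.
      assert (HA1 : unsolvedIn G A1') by (intros c Hc; apply HA; simpl; apply in_or_app; auto).
      assert (HA2 : unsolvedIn G A2') by (intros c Hc; apply HA; simpl; apply in_or_app; auto).
      assert (HB1 : unsolvedIn G B1') by (intros c Hc; apply HB; simpl; apply in_or_app; auto).
      assert (HB2 : unsolvedIn G B2') by (intros c Hc; apply HB; simpl; apply in_or_app; auto).
      destruct (IHdsub1 G th B1' A1' eq_refl eq_refl HI HuP HeP HB1 HA1) as [T [th1 [Hs1 [I1 [X1 Ag1]]]]].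
      pose proof I1 as [Hok1 _].
      assert (Hev : forall c, In c (evars G) -> In c (evars T)) by (apply ext_evars; auto).
      assert (Eq : forall A, unsolvedIn G A -> sapp th A = sapp th1 (apply_ctx T A)).
      { intros A HAu. rewrite sapp_apply by (intros; eapply okp_solved; eauto).
        apply sapp_agree; intros c Hc; symmetry; apply Ag1; apply In_CEx_evars; auto. }
      assert (Un : forall A, unsolvedIn G A -> unsolvedIn T (apply_ctx T A)).
      { intros A HAu; apply unsolved_apply with th1; auto. intros c Hc; apply Hev; apply In_CEx_evars; auto. }
      destruct (IHdsub2 T th1 (apply_ctx T A2') (apply_ctx T B2') (Eq _ HA2) (Eq _ HB2) I1
                  ltac:(rewrite (ext_uvars _ _ X1); auto) HeP (Un _ HA2) (Un _ HB2))
        as [D [th2 [Hs2 [I2 [X2 Ag2]]]]].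
      exists D, th2; split; [eapply asub_arr; eauto|].
      split; [auto | split; [eapply ext_trans; eauto | intros c Hc; rewrite Ag2, Ag1; auto]].
  -
    destruct A0 as [| | |a0|A0'|]; simpl in HX; try discriminate.
    { exfalso. pose proof HI as [_ [_ Hth]]. destruct (Hth a0) as [Hm _]. rewrite <- HX in Hm; simpl in Hm; auto. }
    injection HX; intros; subst A.
    destruct (fresh4 (evars G) (markers G) (fv_e A0') (fv_e B0)) as [Hf1 [Hf2 [Hf3 Hf4]]].
    set (a := S (maxl (evars G ++ markers G ++ fv_e A0' ++ fv_e B0))) in *.
    set (th1 := upd th a t).
    assert (Ag : agree G th th1) by (intros c Hc; apply upd_neq; intro Heq; apply Hf1; rewrite <- Heq; auto).
    assert (I1 : INV (G ++ [CMarker a; CEx a]) th1).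
    { apply INV_snoc_m; auto. eapply wf_closed; eauto. intros; rewrite <- HuP; eapply wf_fv_u; eauto. }
    assert (Hc1 : forall c, closed_at 0 (th1 c)) by (intros; apply I1).
    assert (E1 : open (sapp th A0') t = sapp th1 (open A0' (TEx a))).
    { unfold open; rewrite sapp_open by auto. simpl. assert (Ea : th1 a = t) by apply upd_eq. rewrite Ea. f_equal.
      apply sapp_agree; intros c Hc; symmetry; apply upd_neq; intro Heq; apply Hf3; rewrite <- Heq; auto. }
    assert (E2 : sapp th B0 = sapp th1 B0).
    { apply sapp_agree; intros c Hc; symmetry; apply upd_neq; intro Heq; apply Hf4; rewrite <- Heq; auto. }
    assert (U1 : uvars P = uvars (G ++ [CMarker a; CEx a])) by (rewrite uvars_app, HuP; simpl; rewrite app_nil_r; auto).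
    assert (Un1 : unsolvedIn (G ++ [CMarker a; CEx a]) (open A0' (TEx a))).
    { intros c Hc. unfold open in Hc. destruct (fv_e_open_ex _ _ _ _ Hc) as [Heq|Hc'];
      apply in_or_app; [right; rewrite Heq; simpl; auto | left; apply HA; exact Hc']. }
    assert (Un2 : unsolvedIn (G ++ [CMarker a; CEx a]) B0) by (intros c Hc; apply in_or_app; left; auto).
    destruct (IHdsub _ _ _ _ E1 (eq_trans HY E2) I1 U1 HeP Un1 Un2) as [X [th' [Hs HR]]].
    destruct (rtrunc G (CMarker a) [CEx a] th th1 X th' HR I Ag) as [X1 [X2 [HX1 HR1]]].
    exists X1, th'; split; auto. subst X.
    eapply asub_allL; [|exact Hs]. split; [auto | split; [auto | repeat constructor; auto]].
  -
    destruct B0 as [| | |b0|B0'|]; simpl in HY; try discriminate.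
    { exfalso. pose proof HI as [_ [_ Hth]]. destruct (Hth b0) as [Hm _]. rewrite <- HY in Hm; simpl in Hm; auto. }
    injection HY; intros; subst B.
    destruct H as [Hbu Hbf]. rewrite Forall_forall in Hbf.
    assert (HbA : ~ In b (fv_u A0)) by (intro; apply (Hbf (sapp th A0)); [simpl; auto | apply fv_u_sapp; auto]).
    assert (HbB : ~ In b (fv_u B0')) by (intro; apply (Hbf (sapp th B0')); [simpl; auto | apply fv_u_sapp; auto]).
    assert (HbG : ~ In b (uvars G)) by (rewrite <- HuP; auto).
    assert (E2 : open (sapp th B0') (TFVar b) = sapp th (open B0' (TFVar b))).
    { unfold open; rewrite sapp_open by (intros; apply HI). auto. }
    assert (I1 : INV (G ++ [CUVar b]) th) by (apply INV_snoc_u; auto).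
    assert (U1 : uvars (P ++ [CUVar b]) = uvars (G ++ [CUVar b])) by (rewrite !uvars_app, HuP; auto).
    assert (Ev1 : evars (P ++ [CUVar b]) = []) by (rewrite evars_app, HeP; auto).
    assert (Un1 : unsolvedIn (G ++ [CUVar b]) A0) by (intros c Hc; apply in_or_app; left; auto).
    assert (Un2 : unsolvedIn (G ++ [CUVar b]) (open B0' (TFVar b))).
    { intros c Hc; unfold open in Hc; rewrite fv_e_open_fvar in Hc; apply in_or_app; left; auto. }
    destruct (IHdsub _ _ _ _ HX E2 I1 U1 Ev1 Un1 Un2) as [X [th' [Hs HR]]].
    destruct (rtrunc G (CUVar b) [] th th X th' HR I (agree_refl _ _)) as [X1 [X2 [HX1 HR1]]].
    exists X1, th'; split; auto. subst X.
    eapply asub_allR; [|exact Hs]. split; [auto | repeat constructor; auto].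
Qed.

Lemma decl_init : forall G th U E, decl_ctx G -> okp th U E G /\ evars G = [].
Proof.
  induction G as [|e G IH]; intros th U E HD; simpl; auto.
  inversion HD; subst. destruct e; simpl in *; try contradiction.
  - destruct (IH th (U ++ [n]) (E ++ []) H2) as [H3 H4]; auto.
  - destruct (IH th (U ++ []) (E ++ []) H2) as [H3 H4]; auto.
Qed.

Theorem mainTheorem8 (Psi : ctx) (A B : typ) :
  wf_ctx Psi -> decl_ctx Psi -> decl_typ A -> decl_typ B ->
  dsub Psi A B -> exists Delta, asub Psi A B Delta.
Proof.
  intros HW HD HA HB Hd.
  set (th := fun _ : nat => TUnit).
  assert (HI : INV Psi th).
  { destruct (decl_init Psi th [] [] HD) as [H1 H2]. split; [auto | split].
    - rewrite H2; constructor.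
    - intros; simpl; auto. }
  assert (Hev : evars Psi = []) by (apply (decl_init Psi th [] [] HD)).
  unfold decl_typ in HA, HB.
  destruct (asub_complete Psi A B Hd Psi th A B (eq_sym (sapp_decl th A HA)) (eq_sym (sapp_decl th B HB))
              HI eq_refl Hev) as [D [th' [Has _]]].
  - intros c Hc; rewrite HA in Hc; contradiction.
  - intros c Hc; rewrite HB in Hc; contradiction.
  - exists D; auto.
Qed.
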